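(* Let $p\ge 3$ be a prime, let $r=\lfloor\sqrt{p}\rfloor$ and $s=\lfloor\frac{p-2}{r}\rfloor$, and let $t$ be any integer with $0\le t\le p-r$. Then the set $$\{(x,x):x\in\mathbb{F}_p\}\ \cup\ \big([t,t+r-1]\times\{0,r,2r,\ldots,sr,p-1\}\big)\subseteq\mathbb{F}_p^2$$ is a $1$-blocking set in $\mathbb{F}_p^2$, i.e., it meets every affine line of $\mathbb{F}_p^2$ in at least one point.
   Context: $\mathbb{F}_p$ is identified with $\{0,1,\ldots,p-1\}$ with the ordering inherited from $\mathbb{Z}$; for integers $m\le n$, $[m,n]$ denotes $\{m,m+1,\ldots,n\}$ (viewed as elements of $\mathbb{F}_p$). An affine line in $\mathbb{F}_p^2$ is a set $\{\mathbf{a}+\lambda\mathbf{v}:\lambda\in\mathbb{F}_p\}$ with $\mathbf{v}\neq\mathbf{0}$. *)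

(* Defs.v *)
From mathcomp Require Import all_boot all_algebra.
Set Implicit Arguments. Unset Strict Implicit. Unset Printing Implicit Defensive.
Import GRing.Theory.
Local Open Scope ring_scope.

Definition on_line (p : nat) (a v : 'F_p * 'F_p) (z : 'F_p * 'F_p) : Prop :=
  exists lam : 'F_p, z = (a.1 + lam * v.1, a.2 + lam * v.2).

Definition blk_set (p r s t : nat) (z : 'F_p * 'F_p) : Prop :=
  z.1 = z.2 \/
  ((exists i : nat, (t <= i <= t + r - 1)%N /\ z.1 = i%:R) /\
   ((exists k : nat, (k <= s)%N /\ z.2 = (k * r)%:R) \/ z.2 = (p - 1)%:R)).

Definition blocking1 (p : nat) (B : 'F_p * 'F_p -> Prop) : Prop :=
  forall a v : 'F_p * 'F_p, v != (0, 0) ->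
    exists z, on_line a v z /\ B z.
Arguments blk_set : clear implicits.
Arguments blocking1 : clear implicits.

(* Main.v *)
Require Import Defs.
From mathcomp Require Import all_boot all_algebra.
From mathcomp Require Import zify ring.
Import GRing.Theory.

Lemma nat_part (p r t n : nat) :
  (1 <= r)%N -> (3 <= p)%N -> (p - 2 < ((p - 2) %/ r).+1 * r)%N ->
  (t <= p - r)%N -> (n < p)%N ->
  exists x y : nat, (t <= x <= t + r - 1)%N /\
    ((exists k : nat, (k <= (p - 2) %/ r)%N /\ y = (k * r)%N) \/ y = (p - 1)%N) /\
    ((y + 1) = (x + n + 1) %[mod p])%N.
Proof.
move=> r1 p3 hs ht hn.
set s := (p - 2) %/ r in hs *.
set d := ((n + t + r) %% p)%N.
have dlt : (d < p)%N by apply: ltn_pmod; lia.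
case: (posnP d) => [d0|dpos].
  exists (t + r - 1)%N, (p - 1)%N; split; first lia.
  split; first by right.
  have -> : (p - 1 + 1 = p)%N by lia.
  have -> : (t + r - 1 + n + 1 = n + t + r)%N by lia.
  by rewrite modnn -/d d0.
set e := d.-1.
have ed : e = (e %/ r * r + e %% r)%N by apply: divn_eq.
have jr : (e %% r < r)%N by apply: ltn_pmod.
set q := e %/ r in ed *. set j := e %% r in ed jr *.
have qs : (q <= s)%N.
  have : (q * r < s.+1 * r)%N by lia.
  by rewrite ltn_mul2r; case/andP.
exists (t + r - 1 - j)%N, (q * r)%N; split; first lia.
split; first by left; exists q.
apply/eqP; rewrite -(eqn_modDr j).
have -> : (q * r + 1 + j = d)%N by lia.
have -> : (t + r - 1 - j + n + 1 + j = n + t + r)%N by lia.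
by rewrite modn_mod.
Qed.

Theorem lemma1 (p r t : nat) :
  prime p -> (3 <= p)%N ->
  (r * r <= p < r.+1 * r.+1)%N ->
  (t <= p - r)%N ->
  blocking1 p (blk_set p r ((p - 2) %/ r) t).
Proof.
Local Open Scope ring_scope.
move=> pp p3 /andP[hr1 hr2] ht [a1 a2] [v1 v2] /= v0.
have r1 : (1 <= r)%N by move: hr2; case: (r) => [|rr] /=; lia.
have hs : (p - 2 < ((p - 2) %/ r).+1 * r)%N by rewrite -ltn_divLR.
case: (eqVneq v1 v2) => [ev | nev].
- subst v2.
  have w0 : (v1 != 0)%R.
    by apply: contra v0 => /eqP ->.
  set c := a2 - a1.
  have cp : (val c < p)%N.
    by have := ltn_ord c; rewrite [X in (_ < X)%N -> _]Fp_cast.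
  have [x [y [hx [hy hm]]]] := nat_part _ _ _ _ r1 p3 hs ht cp.
  have hF : (y%:R : 'F_p) = x%:R + c.
    have : ((y + 1)%:R : 'F_p) = (x + val c + 1)%:R.
      by rewrite -(Fp_nat_mod pp (y + 1)) hm Fp_nat_mod.
    rewrite !natrD => /addIr ->; congr (_ + _).
    by apply: val_inj; rewrite /= (val_Fp_nat pp) modn_small.
  exists (x%:R, y%:R); split.
    exists ((x%:R - a1) / v1); rewrite /= hF /c.
    congr pair; field; exact: w0.
  right; split; first by exists x.
  case: hy => [[k [hk ->]] | ->]; [left; exists k | right]; by [].
- exists (a1 + (a2 - a1) / (v1 - v2) * v1, a2 + (a2 - a1) / (v1 - v2) * v2).
  split; first by exists ((a2 - a1) / (v1 - v2)).
  left => /=.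
  field; by rewrite subr_eq0.
Qed.
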